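(* Let $k$ be even, $1\le s\le k-1$, and let $G$ be a $k$-uniform $s$-cycle with $m$ edges and $n=m(k-s)$ vertices, where $k=q(k-s)$ for an odd integer $q$. Then $G$ is odd-bipartite.
   Context: A $k$-uniform $s$-cycle with $m$ edges has vertex set $\mathbb{Z}_n$, $n=m(k-s)$ (vertex $n+i$ identified with $i$), and edges $e_j=\{j(k-s)+1,\ldots,j(k-s)+k\}$, $j=0,\ldots,m-1$; it is assumed that $n\ge 2k-s$. A $k$-uniform hypergraph with $k$ even and vertex set $V$ is odd-bipartite if either it has no edges or there is a partition $V=V_1\cup V_2$ with $V_1,V_2\ne\emptyset$ such that every edge intersects $V_1$ in an odd number of vertices. *)

(* Defs.v *)
From mathcomp Require Import all_boot.
Set Implicit Arguments. Unset Strict Implicit. Unset Printing Implicit Defensive.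

(* Vertex set Z_n is represented by 'I_n; vertex x (any nat) is identified
   with x %% n.  Edge e_j = {j(k-s)+1, ..., j(k-s)+k} (mod n). *)
Definition scycle_edge (n k s j : nat) : {set 'I_n} :=
  [set v : 'I_n | [exists t : 'I_k, (j * (k - s) + t.+1) %% n == v]].

Definition scycle_edges (n k s m : nat) : {set {set 'I_n}} :=
  [set scycle_edge n k s j | j : 'I_m].

Definition odd_bipartite (V : finType) (E : {set {set V}}) : Prop :=
  E = set0 \/
  exists V1 : {set V}, V1 != set0 /\ ~: V1 != set0 /\
    forall e, e \in E -> odd #|e :&: V1|.

(* Main.v *)
Require Import Defs.
From mathcomp Require Import all_boot zify.

Lemma count_mult1 d a : 0 < d -> count (fun x => x %% d == 0) (iota a d) = 1.
Proof.
case: d => // e _; elim: a => [|a IH].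
  rewrite /= (@eq_in_count _ _ pred0) ?count_pred0 // => x.
  rewrite mem_iota => /andP[h1 h2] /=; rewrite modn_small; lia.

have E: iota (a.+1) e.+1 = rcons (iota a.+1 e) (a + e.+1).
  by rewrite -[e.+1]addn1 iotaD cats1 /=; congr rcons; lia.
rewrite E -cats1 count_cat /= modnDr addn0 -IH /=; lia.
Qed.

Lemma count_multq d q a : 0 < d -> count (fun x => x %% d == 0) (iota a (q * d)) = q.
Proof.
move=> d0; elim: q a => [|q IH] a; first by rewrite mul0n.
by rewrite mulSn iotaD count_cat count_mult1 // IH.
Qed.
Require Import Defs.
Theorem corollary4p1 (k s m q : nat) :
  ~~ odd k -> 1 <= s -> s <= k - 1 ->
  odd q -> k = q * (k - s) ->
  2 * k - s <= m * (k - s) ->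
  odd_bipartite (scycle_edges (m * (k - s)) k s m).
Proof.
move=> ek s1 sk oq kq hn.
set d := k - s in kq hn *; set n := m * d.
have d1 : 1 < d.
  case E: d => [|[|d']] //; rewrite E in kq; first by lia.
  by move: ek; rewrite kq muln1 oq.
have kn : k < n by lia.
have n0 : 0 < n by lia.
have dn : d %| n by apply: dvdn_mull.
right; exists [set v : 'I_n | val v %% d == 0]; split; [|split].
- apply/set0Pn; exists (Ordinal n0); by rewrite inE mod0n.
- apply/set0Pn; have h1n : 1 < n by lia.
  exists (Ordinal h1n).
  by rewrite !inE /= modn_small.
move=> e /imsetP [j _ ->].
pose f (t : 'I_k) : 'I_n := Ordinal (ltn_pmod (j * d + t.+1) n0).
have -> : scycle_edge n k s j :&: [set v : 'I_n | val v %% d == 0]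
   = f @: [set t : 'I_k | (j * d + t.+1) %% d == 0].
  apply/setP => v; rewrite !inE; apply/andP/imsetP.
  - case=> /existsP [t /eqP hv0] hv; exists t.
      by rewrite inE -(modn_dvdm _ dn) hv0.
    by apply: val_inj; rewrite /= hv0.
  - case=> t; rewrite inE => ht ->; split; last by rewrite /= (modn_dvdm _ dn).
    by apply/existsP; exists t.
rewrite card_in_imset.
  rewrite cardE /enum_mem -enumT size_filter.
  rewrite (@eq_count _ _ (preim val (fun x => (j * d + x.+1) %% d == 0))); last first.
    by move=> x; rewrite !inE.
  rewrite -count_map.
  rewrite val_enum_ord.
  have -> : iota 0 k = [seq x - (j * d).+1 | x <- iota (j * d).+1 k].
    have := iotaDl (j * d).+1 0 k; rewrite addn0 => ->.
    by rewrite -map_comp map_id_in // => x _ /=; lia.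
  rewrite count_map (@eq_in_count _ _ (fun x => x %% d == 0)).
    by rewrite kq count_multq //; lia.
  move=> x; rewrite mem_iota => /andP [h1 h2] /=; congr (_ %% _ == _); lia.
move=> t1 t2 _ _ /(congr1 val) /= /eqP; rewrite eqn_modDl => /eqP.
have h1 : t1.+1 < n by have := ltn_ord t1; lia.
have h2 : t2.+1 < n by have := ltn_ord t2; lia.
rewrite !modn_small // => h; apply: val_inj; move: h => /eqP; rewrite eqSS => /eqP.
by move=> h; exact: h.
Qed.
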